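(* For every $d\in2\mathbb N$, every $\tau\in S_d$ and every $n\in\mathbb N$ with $n>d(p-1)+d(4p-4)+\frac{d^2}{2}(4p-4)+\frac d2$, $$\binom{n-d(p-1)-d(4p-4)-\frac{d^2}{2}(4p-4)}{d/2}\le N(d,n,\tau).$$
   Context: Fix an integer $p\ge2$; $F_p=\langle x_0,x_1,\dots\mid x_nx_k=x_kx_{n+p-1}\ \forall k<n\rangle$ with identity $e$. For $d\in\mathbb N$ and $[d]=\{1,\dots,d\}$, a word of length $d$ is a tuple $w=(x_{i(1)}^{\epsilon(1)},\dots,x_{i(d)}^{\epsilon(d)})$ with $i:[d]\to\mathbb N_0$, $\epsilon:[d]\to\{1,-1\}$, written $w=(i,\epsilon)$; $\mathrm{eval}(w)=x_{i(1)}^{\epsilon(1)}\cdots x_{i(d)}^{\epsilon(d)}$; $\mathcal W_0(d,n)$ is the set of words of length $d$ with $\mathrm{eval}(w)=e$ and $i$ taking values in $\{0,\dots,n-1\}$. Rewriting relations: ($\rightsquigarrow$) a consecutive pair $(x_a^{-1},x_b)$ is replaced by $(x_b,x_{a+p-1}^{-1})$ if $a>b$, by $(x_{b+p-1},x_a^{-1})$ if $a<b$, by $(x_b,x_a^{-1})$ if $a=b$; ($\rightarrowtail$, on $\rightsquigarrow$-irreducible words) $(x_a,x_b)$ with $b-p+1>a$ is replaced by $(x_{b-p+1},x_a)$, and $(x_a^{-1},x_b^{-1})$ with $a-p+1>b$ by $(x_b^{-1},x_{a-p+1}^{-1})$. The normal form $\mathrm{NF}(w)$ is obtained by applying $\rightsquigarrow$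 until irreducible and then $\rightarrowtail$ until irreducible (well defined). Each step swaps two adjacent letters; $\tau(w)\in S_d$ is defined by letting $\tau(w)(l)$ be the position in $\mathrm{NF}(w)$ of the letter originating from the $l$-th letter of $w$. For $\tau\in S_d$: $\mathcal W_0(d,n,\tau)=\{w\in\mathcal W_0(d,n):\tau(w)=\tau\}$ and $N(d,n,\tau)=|\mathcal W_0(d,n,\tau)|$. *)

(* Defs.v *)
From mathcomp Require Import all_boot all_order all_fingroup.
From mathcomp Require Import boolp.
Set Implicit Arguments. Unset Strict Implicit. Unset Printing Implicit Defensive.

(* A letter x_i^{eps} is encoded as (i, b) with b = true for eps = 1 and
   b = false for eps = -1. *)
Definition letter := (nat * bool)%type.

Section Fp.
Variable p : nat.

(* The congruence on words generating equality in
   F_p = < x_0, x_1, ... | x_n x_k = x_k x_{n+p-1} (k < n) >. *)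
Inductive basic_rel : seq letter -> seq letter -> Prop :=
| br_inv1 a : basic_rel [:: (a, true); (a, false)] [::]
| br_inv2 a : basic_rel [:: (a, false); (a, true)] [::]
| br_rel n k : k < n ->
    basic_rel [:: (n, true); (k, true)] [:: (k, true); (n + p - 1, true)].

Inductive Fp_eq : seq letter -> seq letter -> Prop :=
| Fp_ctx u l r v : basic_rel l r -> Fp_eq (u ++ l ++ v) (u ++ r ++ v)
| Fp_refl w : Fp_eq w w
| Fp_sym w w' : Fp_eq w w' -> Fp_eq w' w
| Fp_trans w1 w2 w3 : Fp_eq w1 w2 -> Fp_eq w2 w3 -> Fp_eq w1 w3.

Definition eval_is_e (w : seq letter) : Prop := Fp_eq w [::].

(* Tagged letters: (letter, index of the position in the original word). *)
Definition tletter := (letter * nat)%type.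

Inductive rw1_pair : tletter -> tletter -> tletter -> tletter -> Prop :=
| rw1_gt a b i j : b < a ->
    rw1_pair ((a, false), i) ((b, true), j) ((b, true), j) ((a + p - 1, false), i)
| rw1_lt a b i j : a < b ->
    rw1_pair ((a, false), i) ((b, true), j) ((b + p - 1, true), j) ((a, false), i)
| rw1_eq a i j :
    rw1_pair ((a, false), i) ((a, true), j) ((a, true), j) ((a, false), i).

Inductive rw2_pair : tletter -> tletter -> tletter -> tletter -> Prop :=
| rw2_pos a b i j : a + p - 1 < b ->
    rw2_pair ((a, true), i) ((b, true), j) ((b - p + 1, true), j) ((a, true), i)
| rw2_neg a b i j : b + p - 1 < a ->
    rw2_pair ((a, false), i) ((b, false), j) ((b, false), j) ((a - p + 1, false), i).

Inductive step (R : tletter -> tletter -> tletter -> tletter -> Prop)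
  : seq tletter -> seq tletter -> Prop :=
| step_at u v x1 x2 y1 y2 : R x1 x2 y1 y2 ->
    step R (u ++ [:: x1; x2] ++ v) (u ++ [:: y1; y2] ++ v).

Definition irreducible R (s : seq tletter) : Prop := forall s', ~ step R s s'.

Inductive steps R : seq tletter -> seq tletter -> Prop :=
| steps_refl s : steps R s s
| steps_cons s1 s2 s3 : step R s1 s2 -> steps R s2 s3 -> steps R s1 s3.

Definition tag_word (w : seq letter) : seq tletter := zip w (iota 0 (size w)).

Definition NF_track (w : seq letter) (s_nf : seq tletter) : Prop :=
  exists s1, [/\ steps rw1_pair (tag_word w) s1, irreducible rw1_pair s1,
                 steps rw2_pair s1 s_nf & irreducible rw2_pair s_nf].

(* tau(w) = tau : the letter originating from position l of w ends in
   position tau(l) of NF(w) (positions are 0-based here). *)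
Definition tau_is (d : nat) (w : seq letter) (tau : 'S_d) : Prop :=
  exists s_nf, NF_track w s_nf /\
    forall l : 'I_d, index (val l) (map snd s_nf) = val (tau l).

Definition word_of (d n : nat) (w : d.-tuple ('I_n * bool)) : seq letter :=
  map (fun x => (val x.1, x.2)) (val w).

Definition Ncount (d n : nat) (tau : 'S_d) : nat :=
  #|[set w : d.-tuple ('I_n * bool) |
      `[< eval_is_e (word_of w) /\ tau_is (word_of w) tau >] ]|.

End Fp.

(* Main.v *)
Require Import Defs.
From mathcomp Require Import all_boot all_order all_fingroup.
From mathcomp Require Import boolp zify ring.
Set Implicit Arguments. Unset Strict Implicit. Unset Printing Implicit Defensive.

Section FpH.
Variable p : nat.

Lemma Fp_ctx' u l r v w w' : basic_rel p l r -> w = u ++ l ++ v -> w' = u ++ r ++ v ->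
  Fp_eq p w w'.
Proof. by move=> h -> ->; apply: Fp_ctx. Qed.

Lemma Fp_cat u v w w' : Fp_eq p w w' -> Fp_eq p (u ++ w ++ v) (u ++ w' ++ v).
Proof.
elim=> [u0 l r v0 h| w0| w1 w2 _ ih| w1 w2 w3 _ ih1 _ ih2].
- apply: (Fp_ctx' (u := u ++ u0) (v := v0 ++ v) h); by rewrite !catA.
- exact: Fp_refl.
- exact: Fp_sym.
- exact: Fp_trans ih1 ih2.
Qed.

Lemma Fp_rw1 x1 x2 y1 y2 : rw1_pair p x1 x2 y1 y2 ->
  Fp_eq p [:: x1.1; x2.1] [:: y1.1; y2.1].
Proof.
case=> [a b i j hba| a b i j hab| a i j] /=.
- apply: Fp_trans (_ : Fp_eq p _ [:: (a,false); (b,true); (a+p-1,true); (a+p-1,false)]) _.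
    apply: Fp_sym; apply: (Fp_ctx' (u := [:: (a,false); (b,true)]) (v:=[::]) (br_inv1 _ _)) => //.
  apply: Fp_trans (_ : Fp_eq p _ [:: (a,false); (a,true); (b,true); (a+p-1,false)]) _.
    apply: Fp_sym; apply: (Fp_ctx' (u := [:: (a,false)]) (v:=[:: (a+p-1,false)]) (br_rel _ hba)) => //.
  by apply: (Fp_ctx' (u := [::]) (v:=[:: (b,true); (a+p-1,false)]) (br_inv2 _ _)).
- apply: Fp_trans (_ : Fp_eq p _ [:: (a,false); (b,true); (a,true); (a,false)]) _.
    apply: Fp_sym; apply: (Fp_ctx' (u := [:: (a,false); (b,true)]) (v:=[::]) (br_inv1 _ _)) => //.
  apply: Fp_trans (_ : Fp_eq p _ [:: (a,false); (a,true); (b+p-1,true); (a,false)]) _.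
    apply: (Fp_ctx' (u := [:: (a,false)]) (v:=[:: (a,false)]) (br_rel _ hab)) => //.
  by apply: (Fp_ctx' (u := [::]) (v:=[:: (b+p-1,true); (a,false)]) (br_inv2 _ _)).
- apply: Fp_trans (_ : Fp_eq p _ [::]) _.
    by apply: (Fp_ctx' (u := [::]) (v:=[::]) (br_inv2 _ _)).
  by apply: Fp_sym; apply: (Fp_ctx' (u := [::]) (v:=[::]) (br_inv1 _ _)).
Qed.

Lemma Fp_rw2 x1 x2 y1 y2 : 1 <= p -> rw2_pair p x1 x2 y1 y2 ->
  Fp_eq p [:: x1.1; x2.1] [:: y1.1; y2.1].
Proof.
move=> hp; case=> [a b i j hab| a b i j hba] /=.
- have h : a < b - p + 1 by lia.
  have e : b - p + 1 + p - 1 = b by lia.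
  apply: Fp_sym; apply: (Fp_ctx' (u := [::]) (v:=[::]) (br_rel _ h)) => //.
  by rewrite e.
- set a' := a - p + 1.
  have h : b < a' by rewrite /a'; lia.
  have e : a' + p - 1 = a by rewrite /a'; lia.
  apply: Fp_sym.
  apply: Fp_trans (_ : Fp_eq p _ [:: (b,false); (a',false); (b,true); (b,false)]) _.
    apply: Fp_sym; apply: (Fp_ctx' (u := [:: (b,false); (a',false)]) (v:=[::]) (br_inv1 _ _)) => //.
  apply: Fp_trans (_ : Fp_eq p _ [:: (b,false); (a',false); (b,true); (a,true); (a,false); (b,false)]) _.
    apply: Fp_sym; apply: (Fp_ctx' (u := [:: (b,false); (a',false); (b,true)]) (v:=[:: (b,false)]) (br_inv1 _ _)) => //.
  apply: Fp_trans (_ : Fp_eq p _ [:: (b,false); (a',false); (a',true); (b,true); (a,false); (b,false)]) _.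
    apply: Fp_sym; apply: (Fp_ctx' (u := [:: (b,false); (a',false)]) (v:=[:: (a,false); (b,false)]) (br_rel _ h)) => //.
    by rewrite e.
  apply: Fp_trans (_ : Fp_eq p _ [:: (b,false); (b,true); (a,false); (b,false)]) _.
    by apply: (Fp_ctx' (u := [:: (b,false)]) (v:=[:: (b,true); (a,false); (b,false)]) (br_inv2 _ _)).
  by apply: (Fp_ctx' (u := [::]) (v:=[:: (a,false); (b,false)]) (br_inv2 _ _)).
Qed.

Lemma Fp_step1 s s' : step (rw1_pair p) s s' -> Fp_eq p (map fst s) (map fst s').
Proof.
case=> u v x1 x2 y1 y2 h; rewrite !map_cat /=.
exact: (Fp_cat (map fst u) (map fst v) (Fp_rw1 h)).
Qed.

Lemma Fp_step2 s s' : 1 <= p -> step (rw2_pair p) s s' -> Fp_eq p (map fst s) (map fst s').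
Proof.
move=> hp; case=> u v x1 x2 y1 y2 h; rewrite !map_cat /=.
exact: (Fp_cat (map fst u) (map fst v) (Fp_rw2 hp h)).
Qed.

Lemma Fp_steps R s s' : (forall s s', step R s s' -> Fp_eq p (map fst s) (map fst s')) ->
  steps R s s' -> Fp_eq p (map fst s) (map fst s').
Proof.
move=> H; elim=> [s0|s1 s2 s3 h _ ih]; first exact: Fp_refl.
exact: Fp_trans (H _ _ h) ih.
Qed.

Lemma Fp_pal (f : nat -> nat) (s : seq nat) :
  Fp_eq p ([seq (f j, true) | j <- s] ++ [seq (f j, false) | j <- rev s]) [::].
Proof.
elim: s => [|j s ih] /=; first exact: Fp_refl.
rewrite rev_cons map_rcons.
apply: Fp_trans (_ : Fp_eq p _ ((f j, true) :: [:: (f j, false)])) _.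
  rewrite -cats1 -cat_cons.
  have := Fp_cat [:: (f j, true)] [:: (f j, false)] ih.
  by rewrite /= !catA.
by apply: (Fp_ctx' (u := [::]) (v := [::]) (br_inv1 _ _)).
Qed.

Lemma steps_trans R a b c : steps R a b -> steps R b c -> steps R a c.
Proof. by elim=> // s1 s2 s3 h _ ih /ih; apply: steps_cons. Qed.

End FpH.

Section Dec.
Variables (p d k : nat) (sg : nat -> bool) (rk : nat -> nat) (c : nat -> nat).

Definition cP t (L : seq nat) := count (fun f => sg f && (rk t < rk f)) L.
Definition cN t (L : seq nat) := count (fun f => ~~ sg f && (rk t < rk f)) L.
Definition valf t L := (c (rk t) + (p - 1) * cP t L) - (p - 1) * cN t L.

Fixpoint dec (L A : seq nat) : seq tletter :=
  if A is t :: A' then ((valf t L, sg t), t) :: dec (t :: L) A' else [::].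

Lemma valf_perm t L L' : perm_eq L L' -> valf t L = valf t L'.
Proof. by move/seq.permP=> h; rewrite /valf /cP /cN !h. Qed.

Lemma dec_perm L L' A : perm_eq L L' -> dec L A = dec L' A.
Proof.
elim: A L L' => [|t A ih] L L' h //=.
by rewrite (valf_perm t h) (ih (t :: L) (t :: L')) // perm_cons.
Qed.

Lemma dec_cat L u v : dec L (u ++ v) = dec L u ++ dec (rev u ++ L) v.
Proof.
elim: u L => [|t u ih] L //=.
by rewrite ih rev_cons cat_rcons.
Qed.

Lemma dec_snd L A : map snd (dec L A) = A.
Proof. by elim: A L => [|t A ih] L //=; rewrite ih. Qed.

Lemma dec_sg L A : map (fun e => e.1.2) (dec L A) = map sg A.
Proof. by elim: A L => [|t A ih] L //=; rewrite ih. Qed.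

Lemma dec_size L A : size (dec L A) = size A.
Proof. by rewrite -(size_map snd) dec_snd. Qed.

Lemma dec_nth L A : dec L A =
  [seq ((valf (nth 0 A i) (rev (take i A) ++ L), sg (nth 0 A i)), nth 0 A i) | i <- iota 0 (size A)].
Proof.
elim: A L => [|t A ih] L //=.
rewrite ih /= -[1]/(1 + 0) iotaDl -map_comp; congr (_ :: _).
apply: eq_map => i /=.
by rewrite /= rev_cons cat_rcons.
Qed.

Lemma dec_swap R L u x y v :
  R ((valf x (rev u ++ L), sg x), x) ((valf y (x :: rev u ++ L), sg y), y)
    ((valf y (rev u ++ L), sg y), y) ((valf x (y :: rev u ++ L), sg x), x) ->
  step R (dec L (u ++ x :: y :: v)) (dec L (u ++ y :: x :: v)).
Proof.
move=> h; rewrite !dec_cat /=.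
rewrite (@dec_perm (y :: x :: rev u ++ L) (x :: y :: rev u ++ L)); last first.
  by rewrite -[x :: y :: _]/([:: x; y] ++ _) -[y :: x :: _]/([:: y; x] ++ _) perm_cat2r; apply/seq.permP => a /=; rewrite !addn0 addnC.
exact: (step_at (dec L u) (dec (x :: y :: rev u ++ L) v) h).
Qed.

Inductive asteps (ok : nat -> nat -> bool) : seq nat -> seq nat -> Prop :=
| as_refl A : asteps ok A A
| as_swap u x y v B : ok x y -> asteps ok (u ++ y :: x :: v) B -> asteps ok (u ++ x :: y :: v) B.

Lemma asteps_trans ok A B C : asteps ok A B -> asteps ok B C -> asteps ok A C.
Proof. elim=> // u x y v B0 h _ ih /ih; exact: as_swap. Qed.

Lemma asteps_ctx ok a b A B : asteps ok A B -> asteps ok (a ++ A ++ b) (a ++ B ++ b).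
Proof.
elim=> [A0|u x y v B0 h _ ih]; first exact: as_refl.
have e : forall z1 z2, a ++ (u ++ z1 :: z2 :: v) ++ b = (a ++ u) ++ z1 :: z2 :: (v ++ b).
  by move=> z1 z2; rewrite -!catA.
by rewrite e; apply: as_swap h _; rewrite -e.
Qed.

Lemma asteps_cons ok t A B : asteps ok A B -> asteps ok (t :: A) (t :: B).
Proof. by move=> h; have := asteps_ctx [:: t] [::] h; rewrite !cats0. Qed.

Definition pairR (R : tletter -> tletter -> tletter -> tletter -> Prop) (ok : nat -> nat -> bool) :=
  forall L x y, size L < d -> ok x y ->
  R ((valf x L, sg x), x) ((valf y (x :: L), sg y), y) ((valf y L, sg y), y) ((valf x (y :: L), sg x), x).

Lemma asteps_lift R ok A B : pairR R ok -> size A <= d -> asteps ok A B ->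
  steps R (dec [::] A) (dec [::] B).
Proof.
move=> hR hA h; elim: h hA => [A0 _|u x y v B0 hok _ ih hs]; first exact: steps_refl.
apply: steps_cons (ih _); last by move: hs; rewrite !size_cat.
apply: dec_swap; apply: hR => //.
by move: hs; rewrite cats0 size_rev size_cat /=; lia.
Qed.

End Dec.

Section Pairs.
Variables (p d k : nat) (sg : nat -> bool) (rk : nat -> nat) (c : nat -> nat).
Hypothesis hp : 1 <= p.
Hypothesis Hrk : forall t, t < d -> rk t < k.
Hypothesis Hc : forall j, j < k -> (p - 1) * d <= c j.
Hypothesis Hsep : forall i j, i < j -> j < k -> c j + 2 * ((p - 1) * d) + p <= c i.

Lemma cnt_bnd (a : pred nat) L : size L <= d -> (p - 1) * count a L <= (p - 1) * d.
Proof. by move=> h; apply: leq_mul => //; apply: leq_trans (count_size _ _) h. Qed.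

Definition ok1 x y := [&& x < d, y < d, ~~ sg x & sg y].

Lemma rw1_gt' a b i j b' a' : b < a -> b' = b -> a' = a + p - 1 ->
  rw1_pair p ((a,false),i) ((b,true),j) ((b',true),j) ((a',false),i).
Proof. by move=> h -> ->; apply: rw1_gt. Qed.
Lemma rw1_lt' a b i j b' a' : a < b -> b' = b + p - 1 -> a' = a ->
  rw1_pair p ((a,false),i) ((b,true),j) ((b',true),j) ((a',false),i).
Proof. by move=> h -> ->; apply: rw1_lt. Qed.
Lemma rw1_eq' a b i j b' a' : b = a -> b' = a -> a' = a ->
  rw1_pair p ((a,false),i) ((b,true),j) ((b',true),j) ((a',false),i).
Proof. by move=> -> -> ->; apply: rw1_eq. Qed.
Lemma rw2_pos' a b i j b' a' : a + p - 1 < b -> b' = b - p + 1 -> a' = a ->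
  rw2_pair p ((a,true),i) ((b,true),j) ((b',true),j) ((a',true),i).
Proof. by move=> h -> ->; apply: rw2_pos. Qed.
Lemma rw2_neg' a b i j b' a' : b + p - 1 < a -> b' = b -> a' = a - p + 1 ->
  rw2_pair p ((a,false),i) ((b,false),j) ((b',false),j) ((a',false),i).
Proof. by move=> h -> ->; apply: rw2_neg. Qed.

Lemma pairR1 : pairR p d sg rk c (rw1_pair p) ok1.
Proof.
move=> L x y hL /and4P[hx hy /negbTE sx sy].
have hL' : size L <= d by lia.
rewrite /valf /cP /cN /= sx sy /=.
have hcx := Hc (Hrk hx); have hcy := Hc (Hrk hy).
have b1 := cnt_bnd (fun f => sg f && (rk x < rk f)) hL'.
have b2 := cnt_bnd (fun f => ~~ sg f && (rk x < rk f)) hL'.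
have b3 := cnt_bnd (fun f => sg f && (rk y < rk f)) hL'.
have b4 := cnt_bnd (fun f => ~~ sg f && (rk y < rk f)) hL'.
move: b1 b2 b3 b4.
set PX := count (fun f => sg f && (rk x < rk f)) L.
set NX := count (fun f => ~~ sg f && (rk x < rk f)) L.
set PY := count (fun f => sg f && (rk y < rk f)) L.
set NY := count (fun f => ~~ sg f && (rk y < rk f)) L.
move=> b1 b2 b3 b4.
have hs1 := fun (h : rk x < rk y) => Hsep h (Hrk hy).
have hs2 := fun (h : rk y < rk x) => Hsep h (Hrk hx).
move: hs1 hs2.
case: (ltngtP (rk x) (rk y)) => hr /=; rewrite ?add0n ?add1n ?mulnS;
  set u1 := (p-1) * PX; set u2 := (p-1)*NX; set u3 := (p-1)*PY; set u4 := (p-1)*NY;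
  set u5 := (p-1)*d => hs1 hs2.
- have hs := hs1 erefl; apply: rw1_gt'; lia.
- have hs := hs2 erefl; apply: rw1_lt'; lia.
- have e3 : u3 = u1 by rewrite /u3 /u1 /PY /PX hr.
  have e4 : u4 = u2 by rewrite /u4 /u2 /NY /NX hr.
  have e5 : c (rk y) = c (rk x) by rewrite hr.
  apply: rw1_eq'; lia.
Qed.

Definition ok2 x y := [&& x < d, y < d &
  ((sg x && sg y && (rk y < rk x)) || (~~ sg x && ~~ sg y && (rk x < rk y)))].

Lemma pairR2 : pairR p d sg rk c (rw2_pair p) ok2.
Proof.
move=> L x y hL /and3P[hx hy hor].
have hL' : size L <= d by lia.
have hcx := Hc (Hrk hx); have hcy := Hc (Hrk hy).
have b1 := cnt_bnd (fun f => sg f && (rk x < rk f)) hL'.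
have b2 := cnt_bnd (fun f => ~~ sg f && (rk x < rk f)) hL'.
have b3 := cnt_bnd (fun f => sg f && (rk y < rk f)) hL'.
have b4 := cnt_bnd (fun f => ~~ sg f && (rk y < rk f)) hL'.
move: b1 b2 b3 b4.
rewrite /valf /cP /cN /=.
set PX := count (fun f => sg f && (rk x < rk f)) L.
set NX := count (fun f => ~~ sg f && (rk x < rk f)) L.
set PY := count (fun f => sg f && (rk y < rk f)) L.
set NY := count (fun f => ~~ sg f && (rk y < rk f)) L.
move=> b1 b2 b3 b4.
case/orP: hor => /andP[/andP[sx sy] hr].
- have hs := Hsep hr (Hrk hx).
  have e1 : (rk x < rk y) = false by apply/negbTE; rewrite -leqNgt ltnW.
  rewrite sx sy hr e1 /= ?add0n ?add1n ?mulnS.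
  set u1 := (p-1) * PX; set u2 := (p-1)*NX; set u3 := (p-1)*PY; set u4 := (p-1)*NY.
  move: hs b1 b2 b3 b4 hcx hcy; set u5 := (p-1)*d => hs b1 b2 b3 b4 hcx hcy.
  apply: rw2_pos'; lia.
- have hs := Hsep hr (Hrk hy).
  have e1 : (rk y < rk x) = false by apply/negbTE; rewrite -leqNgt ltnW.
  move/negbTE: sx => sx; move/negbTE: sy => sy.
  rewrite sx sy hr e1 /= ?add0n ?add1n ?mulnS.
  set u1 := (p-1) * PX; set u2 := (p-1)*NX; set u3 := (p-1)*PY; set u4 := (p-1)*NY.
  move: hs b1 b2 b3 b4 hcx hcy; set u5 := (p-1)*d => hs b1 b2 b3 b4 hcx hcy.
  apply: rw2_neg'; lia.
Qed.
End Pairs.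

Lemma move_right (ok : nat -> nat -> bool) t P N :
  (forall y, y \in P -> ok t y) -> asteps ok (t :: P ++ N) (P ++ t :: N).
Proof.
elim: P => [|y P ih] H /=; first exact: as_refl.
apply: (@as_swap _ [::]); first by apply: H; rewrite inE eqxx.
rewrite /=; apply: asteps_cons; apply: ih => z hz; apply: H; by rewrite inE hz orbT.
Qed.

Lemma phase1 (ok : nat -> nat -> bool) (sg : nat -> bool) A :
  (forall x y, x \in A -> y \in A -> ~~ sg x -> sg y -> ok x y) ->
  asteps ok A (filter sg A ++ filter (predC sg) A).
Proof.
elim: A => [|t A ih] H /=; first exact: as_refl.
have ih' : asteps ok A (filter sg A ++ filter (predC sg) A).
  by apply: ih => x y hx hy; apply: H; rewrite inE ?hx ?hy orbT.
case st: (sg t) => /=.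
  exact: asteps_cons.
apply: asteps_trans (asteps_cons t ih') _.
apply: move_right => y; rewrite mem_filter => /andP[sy hy].
by apply: H; rewrite ?inE ?eqxx ?hy ?orbT ?st.
Qed.

Lemma move_front (ok : nat -> nat -> bool) u t v :
  (forall y, y \in u -> ok y t) -> asteps ok (u ++ t :: v) (t :: u ++ v).
Proof.
elim: u => [|y u ih] H /=; first exact: as_refl.
apply: asteps_trans (asteps_cons y (ih _)) _.
  by move=> z hz; apply: H; rewrite inE hz orbT.
apply: (@as_swap _ [::]); first by apply: H; rewrite inE eqxx.
exact: as_refl.
Qed.

Lemma sort_target (ok : nat -> nat -> bool) (rel : rel nat) T A :
  transitive rel -> sorted rel T -> perm_eq A T ->
  (forall y t, y \in T -> t \in T -> rel t y -> ok y t) ->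
  asteps ok A T.
Proof.
move=> tr; elim: T A => [|t T ih] A hs hp H.
  by move/perm_size: hp => /= /size0nil ->; exact: as_refl.
have tA : t \in A by rewrite (perm_mem hp) inE eqxx.
case/splitPr: tA hp => u v hp.
have hp' : perm_eq (u ++ v) T.
  rewrite -(perm_cons t); apply: perm_trans hp.
  by rewrite -cat1s perm_catCA.
have hmin := order_path_min tr hs.
apply: asteps_trans (move_front _ _) (asteps_cons t (ih _ (path_sorted hs) hp' _)).
  move=> y hy; have yT : y \in T by rewrite -(perm_mem hp') mem_cat hy.
  apply: H; rewrite ?inE ?yT ?eqxx ?orbT //.
  by move/allP: hmin; apply.
by move=> y z hy hz; apply: H; rewrite inE ?hy ?hz orbT.
Qed.

Lemma step_inv R s s' : step R s s' ->
  exists u v x1 x2 y1 y2, R x1 x2 y1 y2 /\ s = u ++ x1 :: x2 :: v.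
Proof. by case=> u v x1 x2 y1 y2 h; exists u, v, x1, x2, y1, y2. Qed.

Lemma sorted_adj (T : Type) (r : rel T) s u x y v :
  sorted r s -> s = u ++ x :: y :: v -> r x y.
Proof.
move=> hs e; move: hs; rewrite e {e}.
elim: u => [|z u ih] /=; first by case/andP.
by move/path_sorted; exact: ih.
Qed.

Lemma irr_sorted R (r : rel tletter) s : sorted r s ->
  (forall x1 x2 y1 y2, R x1 x2 y1 y2 -> ~~ r x1 x2) -> irreducible R s.
Proof.
move=> hs H s' /step_inv [u [v [x1 [x2 [y1 [y2 [hR e]]]]]]].
by have := sorted_adj hs e; move: (H _ _ _ _ hR) => /negP.
Qed.

Lemma sorted_cat_all (T : eqType) (r : rel T) s1 s2 : sorted r s1 -> sorted r s2 ->
  (forall x y, x \in s1 -> y \in s2 -> r x y) -> sorted r (s1 ++ s2).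
Proof.
case: s1 => [|x s1] //= h1 h2 H.
rewrite cat_path h1 /=; case: s2 h2 H => [|y s2] //= h2 H.
by rewrite h2 andbT; apply: H; rewrite ?mem_last ?inE ?eqxx.
Qed.

Lemma sorted_iota (r : rel nat) m n :
  (forall i, m <= i -> i.+1 < m + n -> r i i.+1) -> sorted r (iota m n).
Proof.
elim: n m => [|n ih] m H //=.
case: n ih H => [|n] ih H //=.
rewrite H ?leqnn //; last by lia.
have := ih m.+1; rewrite /=; apply => i hi hin; apply: H; lia.
Qed.

Definition r1 (e1 e2 : tletter) := e2.1.2 ==> e1.1.2.

Lemma irr1_lemma p s : sorted r1 s -> irreducible (rw1_pair p) s.
Proof. by move=> h; apply: (irr_sorted h); move=> x1 x2 y1 y2 []. Qed.

Definition r2 p (e1 e2 : tletter) :=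
  (e1.1.2 && e2.1.2 ==> (e2.1.1 <= e1.1.1 + p - 1)) &&
  (~~ e1.1.2 && ~~ e2.1.2 ==> (e1.1.1 <= e2.1.1 + p - 1)).

Lemma irr2_lemma p s : sorted (r2 p) s -> irreducible (rw2_pair p) s.
Proof.
move=> h; apply: (irr_sorted h); move=> x1 x2 y1 y2 [] a b i j hab; rewrite /r2 /=; lia.
Qed.

Lemma all_pairwise (T : Type) (a : pred T) (r : rel T) s :
  all a s -> (forall x y, a x -> a y -> r x y) -> pairwise r s.
Proof.
elim: s => [|x s ih] //= /andP[ax hs] H.
rewrite ih // andbT; apply: sub_all hs => y; exact: H.
Qed.

Lemma sorted_signs (sg : nat -> bool) A :
  sorted (fun a b : bool => b ==> a) (map sg (filter sg A ++ filter (predC sg) A)).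
Proof.
rewrite sorted_pairwise; last by move=> [] [] [].
rewrite map_cat pairwise_cat; apply/and3P; split.
- apply/allrelP => x y /mapP[u hu ->] /mapP[v hv ->].
  by move: hu hv; rewrite !mem_filter /= => /andP[-> _] /andP[/negbTE -> _].
- apply: (all_pairwise (a := id)); last by move=> [] [].
  by apply/allP => x /mapP[u]; rewrite mem_filter => /andP[h _] ->.
- apply: (all_pairwise (a := negb)); last by move=> [] [].
  by apply/allP => x /mapP[u]; rewrite mem_filter => /andP[h _] ->.
Qed.

Lemma count_range a b n :
  count (fun m => (a <= m) && (m < b)) (iota 0 n) = minn b n - a.
Proof.
elim: n => [|n ih]; first by rewrite /= minn0.
rewrite -addn1 iotaD count_cat ih /=; lia.
Qed.

Section Tau.
Variables (k : nat) (tau : 'S_(k + k)).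
Local Notation d := (k + k).

Definition tauN t := if (insub t : option 'I_d) is Some i then val (tau i) else t.
Definition sigN t := if (insub t : option 'I_d) is Some i then val ((tau^-1)%g i) else t.
Definition sgT t := tauN t < k.
Definition rkT t := if tauN t < k then tauN t else d.-1 - tauN t.

Lemma tauN_ord (i : 'I_d) : tauN i = tau i.
Proof. by rewrite /tauN valK. Qed.
Lemma sigN_ord (i : 'I_d) : sigN i = (tau^-1)%g i.
Proof. by rewrite /sigN valK. Qed.

Lemma tauN_lt t : t < d -> tauN t < d.
Proof. by move=> h; rewrite -[t]/(nat_of_ord (Ordinal h)) tauN_ord. Qed.
Lemma sigN_lt t : t < d -> sigN t < d.
Proof. by move=> h; rewrite -[t]/(nat_of_ord (Ordinal h)) sigN_ord. Qed.
Lemma sigK t : t < d -> sigN (tauN t) = t.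
Proof.
by move=> h; rewrite -[t]/(nat_of_ord (Ordinal h)) tauN_ord sigN_ord permK.
Qed.
Lemma tauK t : t < d -> tauN (sigN t) = t.
Proof.
by move=> h; rewrite -[t]/(nat_of_ord (Ordinal h)) sigN_ord tauN_ord permKV.
Qed.
Lemma sigN_big t : d <= t -> sigN t = t.
Proof. by move=> h; rewrite /sigN insubF //; apply/negbTE; rewrite -leqNgt. Qed.

Lemma sigN_inj : injective sigN.
Proof.
move=> x y.
case: (ltnP x d) => hx; case: (ltnP y d) => hy.
- by move=> e; rewrite -(tauK hx) -(tauK hy) e.
- by rewrite (sigN_big hy) => e; move: (sigN_lt hx); rewrite e; lia.
- by rewrite (sigN_big hx) => e; move: (sigN_lt hy); rewrite -e; lia.
- by rewrite (sigN_big hx) (sigN_big hy).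
Qed.

Lemma rkT_lt t : t < d -> rkT t < k.
Proof. move=> h; have := tauN_lt h; rewrite /rkT; case: ifP => //; lia. Qed.

Lemma sg_sig i : i < d -> sgT (sigN i) = (i < k).
Proof. by move=> h; rewrite /sgT tauK. Qed.
Lemma rk_sig i : i < d -> rkT (sigN i) = if i < k then i else d.-1 - i.
Proof. by move=> h; rewrite /rkT tauK. Qed.

Definition TP := map sigN (iota 0 k).
Definition TN := map sigN (iota k k).
Definition Anf := map sigN (iota 0 d).

Lemma Anf_cat : Anf = TP ++ TN.
Proof. by rewrite /Anf iotaD map_cat. Qed.

Lemma memTP t : (t \in TP) = (t < d) && sgT t.
Proof.
apply/mapP/andP => [[i]|[ht hs]].
  rewrite mem_iota => /andP[_ hi] ->; split; first by apply: sigN_lt; lia.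
  by rewrite sg_sig //; lia.
exists (tauN t); last by rewrite sigK.
by rewrite mem_iota.
Qed.

Lemma memTN t : (t \in TN) = (t < d) && ~~ sgT t.
Proof.
apply/mapP/andP => [[i]|[ht hs]].
  rewrite mem_iota => /andP[hi1 hi] ->; split; first by apply: sigN_lt; lia.
  by rewrite sg_sig //; lia.
exists (tauN t); last by rewrite sigK.
have := tauN_lt ht; move: hs; rewrite /sgT mem_iota; lia.
Qed.

Lemma perm_P : perm_eq (filter sgT (iota 0 d)) TP.
Proof.
apply: uniq_perm; first by rewrite filter_uniq // iota_uniq.
  by rewrite (map_inj_uniq sigN_inj) iota_uniq.
by move=> t; rewrite mem_filter mem_iota memTP; lia.
Qed.

Lemma perm_N : perm_eq (filter (predC sgT) (iota 0 d)) TN.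
Proof.
apply: uniq_perm; first by rewrite filter_uniq // iota_uniq.
  by rewrite (map_inj_uniq sigN_inj) iota_uniq.
by move=> t; rewrite mem_filter mem_iota memTN /=; lia.
Qed.

Lemma sorted_TP : sorted (fun x y => rkT x < rkT y) TP.
Proof.
rewrite /TP sorted_map; apply: sorted_iota => i _ hi /=.
rewrite !rk_sig; try lia.
by rewrite !ifT //; lia.
Qed.

Lemma sorted_TN : sorted (fun x y => rkT y < rkT x) TN.
Proof.
rewrite /TN sorted_map; apply: sorted_iota => i h1 hi /=.
rewrite !rk_sig; try lia.
rewrite !ifF; lia.
Qed.

Lemma index_Anf (l : 'I_d) : index (val l) Anf = tau l.
Proof.
have -> : val l = sigN (tau l) by rewrite sigN_ord permK.
rewrite /Anf (index_map sigN_inj).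
have h : tau l < size (iota 0 d) by rewrite size_iota.
by have := index_uniq 0 h (iota_uniq 0 d); rewrite nth_iota // -(size_iota 0 d).
Qed.

End Tau.

Section Main.
Variables (k : nat) (tau : 'S_(k + k)) (p : nat) (c : nat -> nat).
Local Notation d := (k + k).
Local Notation sg := (sgT tau).
Local Notation rk := (rkT tau).
Local Notation sig := (sigN tau).
Hypothesis hp : 1 <= p.
Hypothesis Hc : forall j, j < k -> (p - 1) * d <= c j.
Hypothesis Hsep : forall i j, i < j -> j < k -> c j + 2 * ((p - 1) * d) + p <= c i.

Local Notation D := (dec p sg rk c).

Lemma cnt_eq i : i < d ->
  cP sg rk (sig i) (map sig (iota 0 i)) = cN sg rk (sig i) (map sig (iota 0 i)).
Proof.
move=> hi; rewrite /cP /cN !count_map.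
have e : forall (a : pred nat) (b : pred nat), (forall m, m < i -> a m = b m) ->
    count a (iota 0 i) = count b (iota 0 i).
  by move=> a b h; apply: eq_in_count => m; rewrite mem_iota => /andP[_ hm]; apply: h.
rewrite (rk_sig tau hi).
case: (ltnP i k) => hik.
- rewrite (e _ (fun m => (i.+1 <= m) && (m < k))); last first.
    by move=> m hm /=; rewrite sg_sig ?rk_sig; try lia; case: ifP; lia.
  rewrite (e (fun f => ~~ sg (sig f) && _) (fun m => (k <= m) && (m < d.-1 - i))); last first.
    by move=> m hm /=; rewrite sg_sig ?rk_sig; try lia; case: ifP; lia.
  rewrite !count_range; lia.
- rewrite (e _ (fun m => ((d.-1 - i).+1 <= m) && (m < k))); last first.
    by move=> m hm /=; rewrite sg_sig ?rk_sig; try lia; case: ifP; lia.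
  rewrite (e (fun f => ~~ sg (sig f) && _) (fun m => (k <= m) && (m < i))); last first.
    by move=> m hm /=; rewrite sg_sig ?rk_sig; try lia; case: ifP; lia.
  rewrite !count_range; lia.
Qed.

Lemma nf_letters : map fst (D [::] (Anf tau)) =
  [seq (c j, true) | j <- iota 0 k] ++ [seq (c j, false) | j <- rev (iota 0 k)].
Proof.
rewrite dec_nth -map_comp /Anf size_map size_iota.
apply: (@etrans _ _ (map (fun i => (c (rk (sig i)), sg (sig i))) (iota 0 d))).
  apply/eq_in_map => i; rewrite mem_iota => /andP[_ hi] /=.
  rewrite (nth_map 0) ?size_iota // nth_iota // -map_take take_iota.
  rewrite (valf_perm _ _ _ _ _ (_ : perm_eq _ (map sig (iota 0 i)))); last first.
    by rewrite cats0 perm_rev; apply/seq.permP => a; rewrite minnC (minn_idPr _) //; lia.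
  by rewrite /valf cnt_eq // addnK.
rewrite iotaD map_cat; congr (_ ++ _).
  apply/eq_in_map => i; rewrite mem_iota => /andP[_ hi] /=.
  by rewrite sg_sig ?rk_sig ?hi //; lia.
have -> : rev (iota 0 k) = map (fun i => d.-1 - i) (iota k k).
  apply: (@eq_from_nth _ 0); first by rewrite size_rev size_map !size_iota.
  move=> i; rewrite size_rev size_iota => hi.
  rewrite nth_rev ?size_iota // (nth_map 0) ?size_iota // !nth_iota //; lia.
rewrite -map_comp; apply/eq_in_map => i; rewrite mem_iota => /andP[h1 hi] /=.
rewrite sg_sig ?rk_sig; try lia.
have e : (i < k) = false by apply/negbTE; lia.
by rewrite e.
Qed.


Lemma word_good : eval_is_e p (map fst (D [::] (iota 0 d))) /\
  tau_is p (map fst (D [::] (iota 0 d))) tau.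
Proof.
have HR1 := @pairR1 p d k sg rk c hp (@rkT_lt k tau) Hc Hsep.
have HR2 := @pairR2 p d k sg rk c hp (@rkT_lt k tau) Hc Hsep.
set S1 := filter sg (iota 0 d) ++ filter (predC sg) (iota 0 d).
have st1 : steps (rw1_pair p) (D [::] (iota 0 d)) (D [::] S1).
  apply: asteps_lift HR1 _ _; first by rewrite size_iota.
  apply: phase1 => x y hx hy sx sy; rewrite /ok1 sx sy.
  by move: hx hy; rewrite !mem_iota => /andP[_ ->] /andP[_ ->].
have st2 : steps (rw2_pair p) (D [::] S1) (D [::] (Anf tau)).
  apply: asteps_lift HR2 _ _.
    by rewrite size_cat !size_filter count_predC size_iota.
  rewrite Anf_cat.
  have hP : asteps (ok2 d sg rk) (filter sg (iota 0 d)) (TP tau).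
    apply: (sort_target (rel := fun x y => rk x < rk y)).
    - by move=> y x z; apply: ltn_trans.
    - exact: sorted_TP.
    - exact: perm_P.
    move=> y t; rewrite !memTP => /andP[hy sy] /andP[ht st] hr.
    by rewrite /ok2 hy ht sy st hr.
  have hN : asteps (ok2 d sg rk) (filter (predC sg) (iota 0 d)) (TN tau).
    apply: (sort_target (rel := fun x y => rk y < rk x)).
    - by move=> y x z h1 h2; apply: ltn_trans h2 h1.
    - exact: sorted_TN.
    - exact: perm_N.
    move=> y t; rewrite !memTN => /andP[hy /negbTE sy] /andP[ht /negbTE st] hr.
    by rewrite /ok2 hy ht sy st hr.
  apply: asteps_trans (asteps_ctx [::] (filter (predC sg) (iota 0 d)) hP) _.
  by have := asteps_ctx (TP tau) [::] hN; rewrite !cats0.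
have ir1 : irreducible (rw1_pair p) (D [::] S1).
  apply: irr1_lemma.
  by have := sorted_signs sg (iota 0 d); rewrite -(dec_sg p sg rk c [::]) sorted_map.
have ir2 : irreducible (rw2_pair p) (D [::] (Anf tau)).
  apply: irr2_lemma.
  suff : sorted (fun a b : letter => (a.2 && b.2 ==> (b.1 <= a.1 + p - 1)) &&
      (~~ a.2 && ~~ b.2 ==> (a.1 <= b.1 + p - 1))) (map fst (D [::] (Anf tau))).
    by rewrite sorted_map.
  rewrite nf_letters //; apply: sorted_cat_all.
  - rewrite sorted_map; apply: sorted_iota => i _ hi /=.
    rewrite ?andbT; have h2 : i.+1 < k by lia.
    have := Hsep (ltnSn i) h2; move: ((p-1)*d) => u; lia.
  - rewrite map_rev rev_sorted sorted_map; apply: sorted_iota => i _ hi /=.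
    have h2 : i.+1 < k by lia.
    have := Hsep (ltnSn i) h2; move: ((p-1)*d) => u; lia.
  - by move=> x y /mapP[j _ ->] /mapP[j' _ ->].
split.
- rewrite /eval_is_e.
  apply: Fp_trans (Fp_steps (@Fp_step1 p) st1) _.
  apply: Fp_trans (Fp_steps (fun s s' => @Fp_step2 p s s' hp) st2) _.
  rewrite nf_letters //; exact: Fp_pal.
- exists (D [::] (Anf tau)); split.
    exists (D [::] S1); split => //.
    have -> : tag_word (map fst (D [::] (iota 0 d))) = D [::] (iota 0 d).
      rewrite /tag_word size_map dec_size size_iota.
      rewrite -[in X in zip _ X](dec_snd p sg rk c [::] (iota 0 d)).
      exact: zip_unzip.
    exact: st1.
  by move=> l; rewrite dec_snd; exact: index_Anf.
Qed.
End Main.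

Section Count.
Variables (k : nat) (tau : 'S_(k + k)) (p n' M : nat).
Local Notation d := (k + k).
Local Notation n := n'.+1.
Local Notation W := ((p - 1) * d).
Local Notation G := (2 * ((p - 1) * d) + p).
Hypothesis hp : 1 <= p.
Hypothesis hbud : W + (k - 1) * G + M + W <= n.

Definition sS (S : {set 'I_M}) := sort leq (map val (enum S)).
Definition cS S j := W + (k - 1 - j) * G + nth 0 (sS S) (k - 1 - j).
Definition vS S i := valf p (sgT tau) (rkT tau) (cS S) i (iota 0 i).
Definition wS S : d.-tuple ('I_n * bool) := [tuple (inord (vS S i), sgT tau i) | i < d].

Lemma sS_size (S : {set 'I_M}) : #|S| = k -> size (sS S) = k.
Proof. by move=> h; rewrite /sS size_sort size_map -cardE. Qed.

Lemma sS_lt (S : {set 'I_M}) i j : #|S| = k -> i < j -> j < k -> nth 0 (sS S) i < nth 0 (sS S) j.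
Proof.
move=> h hij hj.
have hs : sorted ltn (sS S).
  rewrite ltn_sorted_uniq_leq sort_uniq (map_inj_uniq val_inj) enum_uniq /=.
  exact: (sort_sorted leq_total).
apply: (sorted_ltn_nth ltn_trans 0 hs) => //; rewrite inE sS_size //; lia.
Qed.

Lemma sS_M (S : {set 'I_M}) i : #|S| = k -> i < k -> nth 0 (sS S) i < M.
Proof.
move=> h hi.
have : nth 0 (sS S) i \in sS S by rewrite mem_nth // sS_size.
rewrite mem_sort => /mapP[x _ ->]; exact: ltn_ord.
Qed.

Lemma cS_Hc (S : {set 'I_M}) j : j < k -> W <= cS S j.
Proof. by move=> _; rewrite /cS -addnA leq_addr. Qed.

Lemma cS_sep (S : {set 'I_M}) i j : #|S| = k -> i < j -> j < k -> cS S j + 2 * W + p <= cS S i.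
Proof.
move=> h hij hj; rewrite /cS.
have h1 := sS_lt h (_ : k - 1 - j < k - 1 - i) (_ : k - 1 - i < k).
have h2 : (k - 1 - j).+1 * G <= (k - 1 - i) * G by rewrite leq_mul2r; apply/orP; right; lia.
rewrite mulSn in h2.
move: h2 h1; move: ((k - 1 - j) * G) ((k - 1 - i) * G) => a b h2 h1.
have := h1 ltac:(lia) ltac:(lia); move: h2; move: ((p - 1) * d) => u; lia.
Qed.

Lemma cS_bnd (S : {set 'I_M}) j : #|S| = k -> j < k -> cS S j + W < n.
Proof.
move=> h hj; rewrite /cS.
have h1 := sS_M h (_ : k - 1 - j < k).
have h2 : (k - 1 - j) * G <= (k - 1) * G by rewrite leq_mul2r; apply/orP; right; lia.
move: h2 h1 hbud; move: ((k - 1 - j) * G) ((k - 1) * G) => a b h2 h1.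
move=> hb; have := h1 ltac:(lia); move: h2 hb; move: ((p - 1) * d) => u; lia.
Qed.

Lemma vS_bnd (S : {set 'I_M}) i : #|S| = k -> i < d -> vS S i < n.
Proof.
move=> h hi; rewrite /vS /valf.
have h1 := cS_bnd h (rkT_lt tau hi).
have h2 : (p - 1) * cP (sgT tau) (rkT tau) i (iota 0 i) <= (p - 1) * d.
  apply: leq_mul => //; apply: leq_trans (count_size _ _) _; rewrite size_iota; lia.
move: h1 h2; move: ((p - 1) * d) ((p - 1) * cP (sgT tau) (rkT tau) i (iota 0 i)) => u v.
move: ((p - 1) * cN _ _ _ _) => w; lia.
Qed.

Lemma word_wS (S : {set 'I_M}) : #|S| = k ->
  word_of (wS S) = map fst (dec p (sgT tau) (rkT tau) (cS S) [::] (iota 0 d)).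
Proof.
move=> h.
have e1 : map fst (dec p (sgT tau) (rkT tau) (cS S) [::] (iota 0 d)) =
          map (fun i => (vS S i, sgT tau i)) (iota 0 d).
  rewrite dec_nth size_iota -map_comp; apply/eq_in_map => i; rewrite mem_iota => /andP[_ hi] /=.
  rewrite nth_iota // take_iota minnC (minn_idPr _); last by apply: ltnW.
  have hr : perm_eq (rev (iota 0 i)) (iota 0 i) by rewrite perm_rev.
  by rewrite cats0 /vS (valf_perm _ _ _ _ _ hr).
rewrite e1; apply: (@eq_from_nth _ (0, false)).
  by rewrite /word_of size_map size_tuple size_map size_iota.
move=> i; rewrite /word_of size_map size_tuple => hi.
rewrite (nth_map (ord0, false)) ?size_tuple // (nth_map 0) ?size_iota // nth_iota //.
rewrite -[i]/(nat_of_ord (Ordinal hi)) nth_mktuple /= inordK //.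
exact: vS_bnd.
Qed.

Lemma wS_in (S : {set 'I_M}) : #|S| = k ->
  wS S \in [set w : d.-tuple ('I_n * bool) |
      `[< eval_is_e p (word_of w) /\ tau_is p (word_of w) tau >] ].
Proof.
move=> h; rewrite inE; apply/asboolP; rewrite word_wS //.
apply: word_good => //.
- by move=> j hj; apply: cS_Hc.
- by move=> i j hij hj; apply: cS_sep.
Qed.

Lemma wS_inj : {in [set S : {set 'I_M} | #|S| == k] &, injective wS}.
Proof.
move=> S1 S2; rewrite !inE => /eqP h1 /eqP h2 e.
have ev : forall i, i < d -> vS S1 i = vS S2 i.
  move=> i hi; have := congr1 (fun w => tnth w (Ordinal hi)) e.
  rewrite !tnth_mktuple => [[]] /(congr1 (@nat_of_ord _)).
  by rewrite !inordK //; apply: vS_bnd.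
have ec : forall j, j < k -> cS S1 j = cS S2 j.
  move=> j hj; have hs : sigN tau j < d by apply: sigN_lt; lia.
  have := ev _ hs; rewrite /vS /valf rk_sig; last by lia.
  rewrite ifT //.
  have hb : (p - 1) * cN (sgT tau) (rkT tau) (sigN tau j) (iota 0 (sigN tau j)) <= (p - 1) * d.
    apply: leq_mul => //; apply: leq_trans (count_size _ _) _; rewrite size_iota; lia.
  have c1 := @cS_Hc S1 j hj; have c2 := @cS_Hc S2 j hj.
  move: hb c1 c2.
  move: ((p - 1) * cN _ _ _ _) ((p - 1) * cP _ _ _ _) ((p - 1) * d) => a b u; lia.
have es : sS S1 = sS S2.
  apply: (@eq_from_nth _ 0); first by rewrite !sS_size.
  move=> i; rewrite sS_size // => hi.
  have e3 : k - 1 - (k - 1 - i) = i by lia.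
  have := ec (k - 1 - i) ltac:(lia); rewrite /cS e3.
  move: (i * G) => a; lia.
apply/setP => x.
have hm : forall S : {set 'I_M}, (x \in S) = (val x \in sS S).
  by move=> S; rewrite /sS mem_sort (mem_map val_inj) mem_enum.
by rewrite !hm es.
Qed.

Lemma count_main : 'C(M, k) <= Ncount p n tau.
Proof.
rewrite /Ncount -[M]card_ord -card_draws -(card_in_imset wS_inj).
apply: subset_leq_card; apply/subsetP => w /imsetP[S]; rewrite inE => /eqP h ->.
exact: wS_in.
Qed.

End Count.

Lemma budget k q n : 0 < k -> 0 < q ->
  (k + k) * (q.+1 - 1) + (k + k) * (4 * q.+1 - 4) + (2 * (k * k)) * (4 * q.+1 - 4) + k < n ->
  (q.+1 - 1) * (k + k) + (k - 1) * (2 * ((q.+1 - 1) * (k + k)) + q.+1) +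
   (n - (k + k) * (q.+1 - 1) - (k + k) * (4 * q.+1 - 4) - (2 * (k * k)) * (4 * q.+1 - 4))
   + (q.+1 - 1) * (k + k) <= n.
Proof.
move=> hk hq hn.
have e0 : q.+1 - 1 = q by lia.
have e4 : 4 * q.+1 - 4 = 4 * q by lia.
rewrite e0 e4 in hn *.
have h1 : (k - 1) * (2 * (q * (k + k)) + q.+1) <= k * (2 * (q * (k + k)) + q.+1).
  by apply: leq_mul => //; lia.
have e5 : k * (2 * (q * (k + k)) + q.+1) = 4 * (k * k * q) + k * q + k by ring.
have e1 : q * (k + k) = 2 * (k * q) by ring.
have e2 : (k + k) * q = 2 * (k * q) by ring.
have e3 : (k + k) * (4 * q) = 8 * (k * q) by ring.
have e6 : 2 * (k * k) * (4 * q) = 8 * (k * k * q) by ring.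
have kq : k <= k * q by rewrite leq_pmulr.
rewrite e5 in h1; rewrite e1 in h1 *; rewrite e2 e3 e6 in hn *.
move: h1 hn kq; move: ((k - 1) * (2 * (2 * (k * q)) + q.+1)) (k * q) (k * k * q) => a b c.
lia.
Qed.

Unset Implicit Arguments.

Theorem mainTheorem9 (p : nat) (hp : 2 <= p) (d : nat) (hd0 : 0 < d)
  (hdeven : ~~ odd d) (tau : 'S_d) (n : nat)
  (hn : d * (p - 1) + d * (4 * p - 4) + (d ^ 2 %/ 2) * (4 * p - 4) + d %/ 2 < n) :
  'C(n - d * (p - 1) - d * (4 * p - 4) - (d ^ 2 %/ 2) * (4 * p - 4), d %/ 2)
    <= Ncount p n tau.
Proof.
have [k dk] : exists k, d = k + k.
  exists d./2; have := odd_double_half d; rewrite (negbTE hdeven) add0n -addnn.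
  by move=> ->.
have e1 : d %/ 2 = k by rewrite dk; lia.
have e2 : d ^ 2 %/ 2 = 2 * (k * k).
  rewrite dk (_ : (k + k) ^ 2 = 2 * (k * k) * 2) ?mulnK //.
  by rewrite expnS expn1; ring.
rewrite e1 e2 in hn *.
subst d.
case: n hn => [|n'] hn; first by rewrite ltn0 in hn.
have hk : 0 < k by lia.
case: p hp hn => [|q] hp hn //.
apply: count_main => //.
apply: budget => //; lia.
Qed.
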